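(* Let $\phi_\infty$ be the $\mathcal{BC}c$-formula in the variables $r_0,r_1,r_2,r_3,r'_0,r'_1,r'_2,r'_3,t$ that is the conjunction of the following formulas, where all indices are taken modulo 4 and $[k]$ denotes $k \bmod 4$: (1) $r_0+r_1+r_2+r_3=1$, $r_i\cdot r_j=0$ for $0\le i<j\le 3$, $r_i\neq 0$ for $0\le i\le 3$, $\neg C(r_0,r_2)$ and $\neg C(r_1,r_3)$; (2) $r'_i\neq 0$ and $r'_i\le r_i$ for $0\le i\le 3$, and $t\neq 0$; (3) $c(r'_i+r_{[i+1]}+t)$ for $0\le i\le 3$; (4) $\neg C(r'_i,t)$ for $0\le i\le 3$; (5) $\neg C\bigl(r'_i,\ r_{[i+1]}\cdot(-r'_{[i+1]})\bigr)$ for $0\le i\le 3$. Then $\phi_\infty$ is satisfiable over ${\sf RC}(\mathbb{R}^n)$ for every $n\ge 2$. On the other hand, if $T$ is a locally connected, unicoherent topological space, then in any interpretation over $(T,{\sf RC}(T))$ satisfying $\phi_\infty$, at least one of the variables is assigned a set having infinitely many connected components.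
   Context: For a topological space $T$, ${\sf RC}(T)$ is the set of regular closed subsets of $T$ (sets equal to the closure of their interior); it is a Boolean algebra with $X+Y=X\cup Y$, $X\cdot Y=\overline{\mathrm{int}(X\cap Y)}$, $-X=\overline{T\setminus X}$, $0=\emptyset$, $1=T$, and order $\subseteq$. Terms are built from variables using $+,\cdot,-,0,1$. The language $\mathcal{BC}c$ has atomic formulas $\tau_1=\tau_2$, $C(\tau_1,\tau_2)$ and $c(\tau)$, closed under $\wedge,\vee,\neg$; $\tau\neq 0$ abbreviates $\neg(\tau=0)$ and $\tau_1\le\tau_2$ abbreviates $\tau_1\cdot\tau_2=\tau_1$. An interpretation over $(T,{\sf RC}(T))$ assigns an element of ${\sf RC}(T)$ to each variable; terms are evaluated in the Boolean algebra; $\tau_1=\tau_2$ holds iff the values are equal, $C(\tau_1,\tau_2)$ holds iff the values have nonempty intersection, and $c(\tau)$ holds iff the value is connected (in the subspace topology). A formula is satisfiable over ${\sf RC}(\mathbb{R}^n)$ if some interpretation over $(\mathbb{R}^n,{\sf RC}(\mathbb{R}^n))$ makes it true. A space is locally connected if every neighbourhood of every point includes a connected neighbourhood of that point; $T$ is unicoherent if for any closed connected $X_1,X_2$ with $T=X_1\cup X_2$, the set $X_1\cap X_2$ is connected. *)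

(* Defs.v *)
From HB Require Import structures.
From mathcomp Require Import all_boot all_order all_algebra.
From mathcomp Require Import all_classical all_reals all_analysis.
Set Implicit Arguments. Unset Strict Implicit. Unset Printing Implicit Defensive.
Import Order.TTheory GRing.Theory Num.Theory.
Local Open Scope classical_set_scope.

Section RC.
Variable T : topologicalType.
Implicit Types X Y : set T.

Definition regular_closed X := closure (interior X) = X.

Definition rc_add X Y : set T := X `|` Y.
Definition rc_mul X Y : set T := closure (interior (X `&` Y)).
Definition rc_compl X : set T := closure (~` X).
Definition rc_one : set T := setT.
Definition rc_zero : set T := set0.
Definition rc_le X Y := rc_mul X Y = X.
Definition contact X Y := X `&` Y !=set0.

Definition locally_connected :=
  forall (x : T) (U : set T), nbhs x U ->
    exists V : set T, [/\ nbhs x V, connected V & V `<=` U].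

Definition unicoherent :=
  forall X1 X2 : set T, closed X1 -> closed X2 -> connected X1 -> connected X2 ->
    X1 `|` X2 = setT -> connected (X1 `&` X2).

Definition components X : set (set T) :=
  [set connected_component X x | x in X].

Definition infinitely_many_components X := ~ finite_set (components X).

Definition succ4 (i : 'I_4) : 'I_4 := inord ((i.+1) %% 4).

Definition phi_inf (r r' : 'I_4 -> set T) (t : set T) : Prop :=
  (forall i, regular_closed (r i)) /\ (forall i, regular_closed (r' i)) /\
  regular_closed t /\
  rc_add (rc_add (rc_add (r (inord 0)) (r (inord 1))) (r (inord 2))) (r (inord 3))
    = rc_one /\
  (forall i j : 'I_4, (i < j)%N -> rc_mul (r i) (r j) = rc_zero) /\
  (forall i, r i <> rc_zero) /\
  ~ contact (r (inord 0)) (r (inord 2)) /\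
  ~ contact (r (inord 1)) (r (inord 3)) /\
  (forall i, r' i <> rc_zero /\ rc_le (r' i) (r i)) /\
  t <> rc_zero /\
  (forall i, connected (rc_add (rc_add (r' i) (r (succ4 i))) t)) /\
  (forall i, ~ contact (r' i) t) /\
  (forall i, ~ contact (r' i) (rc_mul (r (succ4 i)) (rc_compl (r' (succ4 i))))).

End RC.

(* Main.v *)
Require Import Defs.
From HB Require Import structures.
From mathcomp Require Import all_boot all_order all_algebra.
From mathcomp Require Import all_classical all_reals all_analysis.
From mathcomp Require Import lra zify.
Import numFieldNormedType.Exports.
Local Open Scope classical_set_scope.
Set Implicit Arguments. Unset Strict Implicit. Unset Printing Implicit Defensive.

Section Part2.
Local Open Scope classical_set_scope.


Section Gen.
Variable T : topologicalType.
Implicit Types A B E X : set T.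

Lemma rc_closed X : regular_closed X -> closed X.
Proof. by rewrite /regular_closed => <-; exact: closed_closure. Qed.

Lemma sep_lemma A B E : connected A -> closed B -> closed E ->
  A `<=` B `|` E -> B `&` E = set0 -> A `&` B !=set0 -> A `<=` B.
Proof.
move=> cA cB cE AU BE AB0.
have H : A `&` B = A.
  apply: cA => //.
  - exists (~` E); first exact: closed_openC.
    apply/seteqP; split => z.
    + move=> [Az Bz]; split => // Ez.
      by have : (B `&` E) z by []; rewrite BE.
    + by move=> [Az nEz]; split => //; case: (AU _ Az).
  - by exists B.
by move=> z Az; rewrite -H in Az; case: Az.
Qed.
End Gen.





Lemma comp_eq (T : topologicalType) (X : set T) x y z :
  connected_component X x z -> connected_component X y z ->
  connected_component X x = connected_component X y.
Proof.
move=> hx hy; rewrite (same_connected_component hx) (same_connected_component hy).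
by [].
Qed.

Lemma comp_split (T : topologicalType) (X : set T) x :
  closed X -> finite_set (components X) ->
  exists D, [/\ closed D, X `<=` connected_component X x `|` D &
     connected_component X x `&` D = set0].
Proof.
move=> cX fX.
exists (\bigcup_(c in [set c | components X c /\ c <> connected_component X x]) c).
split.
- apply: closed_bigcup.
  + by apply: sub_finite_set fX => c [].
  + by move=> c [[z Xz <-] _]; exact: component_closed.
- move=> z Xz.
  have [e|ne] := pselect (connected_component X z = connected_component X x).
    by left; rewrite -e; exact: connected_component_refl.
  right; exists (connected_component X z) => //; last exact: connected_component_refl.
  by split => //; exists z.
- apply/seteqP; split => // z [hz [c [[w Xw <-] ne] hw]].
  by apply: ne; exact: (comp_eq hw hz).
Qed.


Lemma rc_split (T : topologicalType) (R R' : set T) :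
  regular_closed R -> regular_closed R' ->
  R `<=` R' `|` rc_mul R (rc_compl R').
Proof.
move=> hR hR' z Rz.
have [|nR'z] := pselect (R' z); first by left.
right => B Bz.
have oC : open (~` R') by apply: closed_openC; exact: rc_closed.
have B'z : nbhs z (B `&` ~` R').
  by apply: filterI => //; apply: open_nbhs_nbhs; split.
have Rz' : closure (interior R) z by rewrite hR.
move: Rz' => /(_ _ B'z) [w [iRw [Bw nR'w]]].
exists w; split => //.
have : (interior R `&` ~` R') `<=` interior (R `&` closure (~` R')).
  rewrite -open_subsetE; last by apply: openI => //; exact: open_interior.
  by move=> u [/interior_subset Ru nu]; split => //; exact: subset_closure.
by move=> /(_ w) h; apply: h; split.
Qed.

Lemma rc_sub (T : topologicalType) (R R' : set T) :
  regular_closed R -> rc_le R' R -> R' `<=` R.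
Proof.
move=> hR hle z; rewrite -hle => hz.
have cR := rc_closed hR.
rewrite (closure_id R).1 //.
apply: (closureS _ hz) => u /interior_subset [].
by move=> _ Ru.
Qed.

Lemma union_split (T : topologicalType) (I : choiceType) (F : set I)
   (g : I -> set T) (z : T) :
  finite_set F -> (forall i, F i -> closed (g i) /\ connected (g i)) ->
  exists D, [/\ closed D, D `<=` \bigcup_(i in F) g i,
    \bigcup_(i in F) g i `<=` connected_component (\bigcup_(i in F) g i) z `|` D &
    connected_component (\bigcup_(i in F) g i) z `&` D = set0].
Proof.
move=> fF hg; set Y := \bigcup_(i in F) g i.
exists (\bigcup_(i in [set i | F i /\ g i `&` connected_component Y z = set0]) g i).
split.
- apply: closed_bigcup; first by apply: sub_finite_set fF => i [].
  by move=> i [/hg []].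
- by move=> u [i [Fi _] giu]; exists i.
- move=> u [i Fi giu].
  have [e|ne] := pselect (g i `&` connected_component Y z = set0).
    by right; exists i.
  left; have [v [giv cv]] : (g i `&` connected_component Y z) !=set0.
    by apply/set0P/eqP.
  have sub : g i `<=` connected_component Y v.
    apply: connected_component_max => //; last by case: (hg _ Fi).
    by move=> x gx; exists i.
  by rewrite (same_connected_component cv); exact: sub.
- apply/seteqP; split => // u [cu [i [Fi e] giu]].
  by have : (g i `&` connected_component Y z) u by []; rewrite e.
Qed.

Lemma I4cases (i : 'I_4) :
  i = inord 0 \/ i = inord 1 \/ i = inord 2 \/ i = inord 3.
Proof.
case: i => [[|[|[|[|m]]]] Hm].
- by left; apply: val_inj; rewrite /= inordK.
- by right; left; apply: val_inj; rewrite /= inordK.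
- by right; right; left; apply: val_inj; rewrite /= inordK.
- by right; right; right; apply: val_inj; rewrite /= inordK.
- by [].
Qed.

Lemma inord_inj4 (m k : nat) : (m < 4)%N -> (k < 4)%N ->
  (inord m : 'I_4) = inord k -> m = k.
Proof. by move=> hm hk /(congr1 val); rewrite /= !inordK. Qed.

Definition lab (j : nat) : 'I_4 := inord (j %% 4).

Lemma lab_succ j : succ4 (lab j) = lab j.+1.
Proof.
rewrite /succ4 /lab inordK ?ltn_pmod //; congr inord.
by rewrite -addn1 modnDml addn1.
Qed.

Lemma succ4_surj (k : 'I_4) : exists i, succ4 i = k.
Proof.
have e : forall m, (m < 4)%N -> succ4 (inord m) = inord ((m.+1) %% 4).
  by move=> m hm; rewrite /succ4 inordK.
case: (I4cases k) => [->|[->|[->|->]]].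
- by exists (inord 3); rewrite e.
- by exists (inord 0); rewrite e.
- by exists (inord 1); rewrite e.
- by exists (inord 2); rewrite e.
Qed.

Fixpoint walk (T : Type) (f : 'I_4 * T -> T) (x0 : T) (j : nat) : T :=
  if j is j'.+1 then f (lab j', walk f x0 j') else x0.


Lemma adj4 (T : topologicalType) (r : 'I_4 -> set T) (i i' : 'I_4) (z : T) :
  ~ contact (r (inord 0)) (r (inord 2)) -> ~ contact (r (inord 1)) (r (inord 3)) ->
  i <> i' -> r i z -> r i' z ->
  (r (inord 0) `&` r (inord 1)) z \/
  ((r (inord 1) `&` r (inord 2)) `|` (r (inord 2) `&` r (inord 3)) `|`
   (r (inord 3) `&` r (inord 0))) z.
Proof.
move=> n02 n13.
case: (I4cases i) => [->|[->|[->|->]]]; case: (I4cases i') => [->|[->|[->|->]]] => ne h1 h2;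
  first [ by case: ne
        | by exfalso; apply: n02; exists z; split
        | by exfalso; apply: n13; exists z; split
        | by left; split
        | by right; left; left; split
        | by right; left; right; split
        | by right; right; split ].
Qed.

Lemma E12_disj (T : topologicalType) (r : 'I_4 -> set T) :
  ~ contact (r (inord 0)) (r (inord 2)) -> ~ contact (r (inord 1)) (r (inord 3)) ->
  (r (inord 0) `&` r (inord 1)) `&`
  ((r (inord 1) `&` r (inord 2)) `|` (r (inord 2) `&` r (inord 3)) `|`
   (r (inord 3) `&` r (inord 0))) = set0.
Proof.
move=> n02 n13; apply/seteqP; split => // z [[h0 h1] [[[_ h2]|[h2 _]]|[h3 _]]].
- by apply: n02; exists z.
- by apply: n02; exists z.
- by apply: n13; exists z.
Qed.


Lemma part2 (T : topologicalType) : unicoherent T ->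
  forall (r r' : 'I_4 -> set T) (t : set T), phi_inf r r' t ->
       (exists i, infinitely_many_components (r i)) \/
       (exists i, infinitely_many_components (r' i)) \/
       infinitely_many_components t.
Proof.
move=> uni r r' t [rcR [rcR' [rct [cov [mul0 [rne [nc02 [nc13 [r'h [tne [conn [nct nc5]]]]]]]]]]]].
apply: contrapT => hfin.
have Fr : forall i, finite_set (components (r i)).
  by move=> i; apply: contrapT => h; apply: hfin; left; exists i.
have Fr' : forall i, finite_set (components (r' i)).
  by move=> i; apply: contrapT => h; apply: hfin; right; left; exists i.
have cR : forall i, closed (r i) by move=> i; exact: rc_closed.
have cR' : forall i, closed (r' i) by move=> i; exact: rc_closed.
have sub' : forall i, r' i `<=` r i by move=> i; exact: (rc_sub (rcR i) (r'h i).2).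
have [x0 hx0] : r' (inord 0) !=set0 by apply/set0P/eqP; exact: (r'h _).1.
have [t0 ht0] : t !=set0 by apply/set0P/eqP; exact: tne.
have cover : forall z, exists k, r k z.
  move=> z; have : rc_one z by [].
  by rewrite -cov => -[[[h|h]|h]|h]; eexists; exact: h.
have conT : connected [set: T].
  have -> : [set: T] = \bigcup_(i in [set: 'I_4])
      rc_add (rc_add (r' i) (r (succ4 i))) t.
    apply/seteqP; split => z // _.
    have [k hk] := cover z; have [i hi] := succ4_surj k.
    by exists i => //; left; right; rewrite hi.
  apply: bigcup_connected; first by exists t0 => i _; right.
  by move=> i _; exact: conn.
have step : forall i z, r' i z ->
    exists y, connected_component (r' i) z y /\ r' (succ4 i) y.
  move=> i z hz.
  have [D [cD covD disD]] := comp_split z (cR' i) (Fr' i).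
  have Csub : connected_component (r' i) z `<=` r' i.
    exact: connected_component_sub.
  have [[y [Cy Ry]]|e] :=
    pselect (connected_component (r' i) z `&` r (succ4 i) !=set0).
    case: (rc_split (rcR (succ4 i)) (rcR' (succ4 i)) Ry) => [h|h].
      by exists y.
    by exfalso; apply: (nc5 i); exists y; split => //; exact: Csub.
  exfalso.
  have : rc_add (rc_add (r' i) (r (succ4 i))) t `<=` connected_component (r' i) z.
    apply: (@sep_lemma _ _ _ (D `|` r (succ4 i) `|` t) (conn i)).
    - exact: component_closed.
    - by apply: closedU; [apply: closedU|] => //; exact: rc_closed.
    - move=> u [[h|h]|h].
      + by case: (covD _ h) => ?; [left|right; left; left].
      + by right; left; right.
      + by right; right.
    - apply/seteqP; split => // u [Cu [[Du|Ru]|tu]].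
      + by have : (connected_component (r' i) z `&` D) u by []; rewrite disD.
      + by apply: e; exists u.
      + by apply: (nct i); exists u; split => //; exact: Csub.
    - by exists z; split; [left; left | exact: connected_component_refl].
  move=> h; apply: (nct i); exists t0; split => //; apply: Csub; apply: h.
  by right.
have [f hf] : {f : 'I_4 * T -> T & forall p, r' p.1 p.2 ->
    connected_component (r' p.1) p.2 (f p) /\ r' (succ4 p.1) (f p)}.
  apply: (@choice _ _ (fun p y => r' p.1 p.2 ->
    connected_component (r' p.1) p.2 y /\ r' (succ4 p.1) y)) => -[i z].
  have [h|h] := pselect (r' i z).
    by have [y hy] := step i z h; exists y.
  by exists z.
pose x := walk f x0.
have hx : forall j, r' (lab j) (x j).
  elim => [|j IH] //=.
  by rewrite -lab_succ; exact: (hf (lab j, x j) IH).2.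
have hstep : forall j, connected_component (r' (lab j)) (x j) (x j.+1).
  by move=> j; exact: (hf (lab j, x j) (hx j)).1.
pose w j := connected_component (r (lab j)) (x j).
have hW1 : forall j, w j (x j.+1).
  move=> j; apply: (connected_component_max (B := connected_component (r' (lab j)) (x j))).
  - exact: connected_component_refl (hx j).
  - by move=> u /connected_component_sub; exact: sub'.
  - exact: component_connected.
  - exact: hstep.
have hW2 : forall j, w j (x j).
  by move=> j; apply: connected_component_refl; exact: sub' (hx j).
have wsub : forall j, w j `<=` r (lab j).
  by move=> j; exact: connected_component_sub.
have lab4 : forall k, lab (4 * k) = inord 0.
  by move=> k; rewrite /lab; congr inord; lia.
have [k [k' [lkk' ew]]] : exists k k', (k < k')%N /\ w (4 * k) = w (4 * k').
  have [s hs] := iffLR (finite_seqP _) (Fr (inord 0)).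
  have ins : forall k, w (4 * k) \in s.
    move=> k.
    have : components (r (lab (4 * k))) (w (4 * k)).
      by exists (x (4 * k)) => //; exact: sub' (hx _).
    by rewrite lab4 hs.
  have hsub : (fun k => index (w (4 * k)) s) @` `I_(size s).+1 `<=` `I_(size s).
    by move=> _ [m _ <-] /=; rewrite index_mem.
  have : ~ {in `I_(size s).+1 &, injective (fun k => index (w (4 * k)) s)}.
    by move=> inj; have := pigeonhole inj hsub; rewrite ltnn.
  move/existsNP => [m /existsNP [m' /not_implyP [_ /not_implyP [_ /not_implyP [e ne]]]]].
  have ew : w (4 * m) = w (4 * m').
    by rewrite -(nth_index set0 (ins m)) e nth_index.
  case: (ltngtP m m') => [lt|gt|eqm]; last by [].
  - by exists m, m'.
  - by exists m', m.
pose a := (4 * k)%N.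
have laba : lab a = inord 0 by exact: lab4.
pose Q j := (a < j)%N /\ lab j = lab a /\ w j = w a.
have exQ : exists j, `[< Q j >].
  exists (4 * k'); apply/asboolP; split; first by rewrite /a; lia.
  by rewrite laba lab4 ew.
case: (ex_minnP exQ) => b /asboolP [ab [lb wb]] bmin.
have noQ : forall j, (a < j < b)%N -> ~ (lab j = lab a /\ w j = w a).
  move=> j /andP [h1 h2] [h3 h4].
  have := bmin j (asboolT (conj h1 (conj h3 h4))); lia.
have b4 : (b %% 4 = 0)%N.
  apply: inord_inj4; [by rewrite ltn_pmod | by [] | ].
  by move: lb; rewrite laba.
have hab4 : (a + 4 <= b)%N by rewrite /a in ab *; lia.
have lab1 : lab a.+1 = inord 1 by rewrite /lab /a; congr inord; lia.
have lab3 : lab b.-1 = inord 3 by rewrite /lab; congr inord; lia.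
have labb : lab b = inord 0 by rewrite lb.
pose Pc : set ('I_4 * set T) := [set: 'I_4] `*`` (fun i => components (r i)).
have fPc : finite_set Pc.
  by apply: finite_setXR; [exact: finite_finset | move=> i _; exact: Fr].
have hPc : forall p, Pc p -> closed p.2 /\ connected p.2.
  move=> [i c] [_ [z _ <-]]; split; first exact: component_closed.
  exact: component_connected.
have inPc : forall j, Pc (lab j, w j).
  by move=> j; split => //; exists (x j) => //; exact: sub' (hx j).
pose beta : set ('I_4 * set T) :=
  [set p | exists j, (a < j < b)%N /\ p = (lab j, w j)].
pose Bu := \bigcup_(j in [set j | (a < j < b)%N]) w j.
pose Y := \bigcup_(p in Pc `\` beta) p.2.
have Bu_w : forall j, (a < j < b)%N -> w j `<=` Bu.
  by move=> j hj u hu; exists j.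
have wa_Y : w a `<=` Y.
  move=> u hu; exists (lab a, w a) => //; split; first exact: inPc.
  move=> [j [hj [e1 e2]]]; apply: (noQ j hj); split.
  - exact: esym e1.
  - exact: esym e2.
have fY : finite_set (Pc `\` beta) by apply: sub_finite_set fPc => p [].
have cY : closed Y.
  by apply: closed_bigcup => // p [hp _]; exact: (hPc p hp).1.
have cBu : closed Bu.
  apply: closed_bigcup.
    by apply: (@sub_finite_set _ _ `I_b) => // j /andP [].
  by move=> j _; exact: component_closed.
have cover2 : forall z, Y z \/ Bu z.
  move=> z; have [i hi] := cover z.
  have Pp : Pc (i, connected_component (r i) z) by split => //; exists z.
  have zin : connected_component (r i) z z by exact: connected_component_refl.
  have [[j [hj e]]|nb] := pselect (beta (i, connected_component (r i) z)).
    by right; exists j => //; case: e => _ <-.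
  by left; exists (i, connected_component (r i) z).
have hF : forall p, (Pc `\` beta) p -> closed p.2 /\ connected p.2.
  by move=> p [hp _]; exact: hPc.
have [D [cD DY covY disY]] := @union_split T _ (Pc `\` beta) snd (x a) fY hF.
rewrite -/Y in DY covY disY.
pose X1 := connected_component Y (x a).
pose X2 := Bu `|` D.
have xa1Bu : Bu (x a.+1).
  have hj : (a < a.+1 < b)%N by apply/andP; split; lia.
  exact: (Bu_w a.+1 hj (x a.+1) (hW2 a.+1)).
have wa_X1 : w a `<=` X1.
  exact: (connected_component_max (hW2 a) wa_Y (@component_connected _ _ _)).
have Buconn : connected Bu.
  have chain : forall m, (a + m.+1 < b)%N ->
      connected (\bigcup_(j in [set j | (a < j <= a + m.+1)%N]) w j).
    elim => [|m IH] hm.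
      have -> : \bigcup_(j in [set j | (a < j <= a + 1)%N]) w j = w a.+1.
        apply/seteqP; split => u.
          move=> [j /andP [h1 h2] hu]; have e : j = a.+1 by lia.
          by move: hu; rewrite e.
        by move=> hu; exists a.+1 => //; apply/andP; split; lia.
      exact: component_connected.
    have -> : \bigcup_(j in [set j | (a < j <= a + m.+2)%N]) w j =
        \bigcup_(j in [set j | (a < j <= a + m.+1)%N]) w j `|` w (a + m.+2).
      apply/seteqP; split => u.
        move=> [j /andP [h1 h2] hu].
        have [e|ne] := eqVneq j (a + m.+2); first by right; rewrite -e.
        by left; exists j => //; apply/andP; split; lia.
      move=> [[j /andP [h1 h2] hu]|hu].
        by exists j => //; apply/andP; split; lia.
      by exists (a + m.+2) => //; apply/andP; split; lia.
    apply: connectedU; last exact: component_connected.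
      exists (x (a + m.+2)); split; last exact: hW2.
      exists (a + m.+1); first by apply/andP; split; lia.
      by have -> : (a + m.+2 = (a + m.+1).+1)%N by lia; exact: hW1.
    by apply: IH; lia.
  have -> : Bu = \bigcup_(j in [set j | (a < j <= a + (b - a - 2).+1)%N]) w j.
    apply/seteqP; split => u [j /andP [h1 h2] hu]; exists j => //;
      apply/andP; split; lia.
  by apply: chain; lia.
have cX1 : closed X1 by exact: component_closed.
have YX1 : X1 `<=` Y by exact: connected_component_sub.
have X1D : forall u, X1 u -> D u -> False.
  by move=> u h1 h2; have : (X1 `&` D) u by []; rewrite disY.
have key : forall u, D u -> connected_component Y u `&` Bu !=set0.
  move=> u Du; have Yu := DY _ Du.
  have [Du' [cDu' _ covu disu]] := @union_split T _ (Pc `\` beta) snd u fY hF.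
  rewrite -/Y in covu disu.
  apply: contrapT => nn.
  have : [set: T] `<=` connected_component Y u.
    apply: (@sep_lemma _ _ _ (Du' `|` Bu) conT).
    - exact: component_closed.
    - exact: closedU.
    - move=> z _; case: (cover2 z) => [hz|hz]; last by right; right.
      by case: (covu _ hz) => h; [left|right; left].
    - apply/seteqP; split => // z [cz [dz|bz]].
      + by have : (connected_component Y u `&` Du') z by []; rewrite disu.
      + by apply: nn; exists z.
    - by exists u; split => //; exact: connected_component_refl.
  by move=> h; apply: nn; exists (x a.+1); split => //; exact: h.
have X2conn : connected X2.
  have -> : X2 = \bigcup_(u in [set: T]) (Bu `|` (connected_component Y u `&` D)).
    apply/seteqP; split => z.
      move=> [bz|dz]; exists z => //; first by left.
      by right; split => //; apply: connected_component_refl; exact: DY.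
    by move=> [u _ [bz|[_ dz]]]; [left|right].
  apply: bigcup_connected; first by exists (x a.+1) => u _; left.
  move=> u _; have [Du|nDu] := pselect (D u).
    have -> : connected_component Y u `&` D = connected_component Y u.
      apply/seteqP; split => v; first by case.
      move=> cv; split => //.
      have Yv : Y v by exact: connected_component_sub cv.
      case: (covY _ Yv) => // X1v; exfalso.
      have e := comp_eq cv X1v.
      apply: (X1D u) => //; rewrite /X1 -e.
      exact: connected_component_refl (DY _ Du).
    apply: connectedU => //; last exact: component_connected.
    by rewrite setIC; exact: key.
  have -> : connected_component Y u `&` D = set0.
    apply/seteqP; split => // v [cv dv].
    have Yu : Y u.
      apply: contrapT => nY; move: cv.
      by rewrite connected_component_out.
    case: (covY _ Yu) => // X1u.
    apply: (X1D v) => //; rewrite /X1 (same_connected_component X1u).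
    exact: cv.
  by rewrite setU0.
have cover12 : X1 `|` X2 = [set: T].
  apply/seteqP; split => // z _; case: (cover2 z) => [hz|hz]; last by right; left.
  by case: (covY _ hz) => h; [left|right; right].
have Sconn := uni X1 X2 cX1 (closedU cBu cD) (@component_connected _ _ _) X2conn cover12.
pose E1 := r (inord 0) `&` r (inord 1).
pose E2 := (r (inord 1) `&` r (inord 2)) `|` (r (inord 2) `&` r (inord 3)) `|`
   (r (inord 3) `&` r (inord 0)).
have SE : X1 `&` X2 `<=` E1 `|` E2.
  move=> z [X1z [bz|dz]]; last by exfalso; exact: (X1D z).
  case: bz => j hj wjz.
  case: (YX1 _ X1z) => [[i c] [Pq nbq] cz].
  case: Pq => _ /= [y ry ec]; subst c.
  have [ei|nei] := pselect (i = lab j).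
    exfalso; apply: nbq; exists j; split => //.
    subst i; congr pair; exact: (comp_eq cz wjz).
  exact: (adj4 nc02 nc13 nei (connected_component_sub cz) (wsub j z wjz)).
have cE1 : closed E1 by apply: closedI.
have cE2 : closed E2 by apply: closedU; [apply: closedU|]; apply: closedI.
have : X1 `&` X2 `<=` E1.
  apply: (sep_lemma Sconn cE1 cE2 SE (E12_disj nc02 nc13)).
  exists (x a.+1); split; split.
  - exact: wa_X1 (hW1 a).
  - by left.
  - by have := wsub a _ (hW1 a); rewrite laba.
  - by have := wsub a.+1 _ (hW2 a.+1); rewrite lab1.
have xbX1 : X1 (x b) by apply: wa_X1; rewrite -wb; exact: hW2.
have xbw : w b.-1 (x b).
  by have := hW1 b.-1; rewrite prednK //; lia.
have xbX2 : X2 (x b).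
  by left; exists b.-1 => //; apply/andP; split; lia.
have xbE2 : E2 (x b).
  right; split.
  - by have := wsub b.-1 _ xbw; rewrite lab3.
  - by have := wsub b _ (hW2 b); rewrite labb.
move=> /(_ (x b) (conj xbX1 xbX2)) xbE1.
have := E12_disj nc02 nc13.
by move/seteqP => [/(_ (x b)) h _]; apply: h; split.
Qed.

End Part2.

Import Order.TTheory GRing.Theory Num.Theory.
Section Part1.
Local Open Scope ring_scope.
Local Open Scope classical_set_scope.

Definition bk {R : realType} (c k : int) : R := (4 * k + c)%:~R.
Definition Blk {R : realType} (c : int) (x : R) :=
  exists k : int, bk c k <= x <= bk c k + 1.
Definition clo2 {R : realType} (P : R -> R -> Prop) (x y : R) :=
  forall e, 0 < e -> exists x' y', `|x - x'| < e /\ `|y - y'| < e /\ P x' y'.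
Definition int2 {R : realType} (P : R -> R -> Prop) (x y : R) :=
  exists2 e, 0 < e & forall x' y', `|x - x'| < e -> `|y - y'| < e -> P x' y'.

Lemma bk_lt {R : realType} c k c' k' (d : int) :
  (bk c k : R) < bk c' k' + d%:~R -> (4 * k + c < 4 * k' + c' + d)%R.
Proof. by rewrite /bk -intrD ltr_int. Qed.

Lemma bk_le {R : realType} c k c' k' (d : int) :
  (bk c k : R) <= bk c' k' + d%:~R -> (4 * k + c <= 4 * k' + c' + d)%R.
Proof. by rewrite /bk -intrD ler_int. Qed.

Lemma small_pos {R : realType} (e : R) : 0 < e ->
  exists d : R, [/\ 0 < d, d < e & d < 1].
Proof.
move=> he; case: (lerP e 1) => h.
  by exists (e / 2); split; lra.
by exists (1/2); split; lra.
Qed.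

Lemma BU {R : realType} c k k' (x x' : R) :
  bk c k <= x <= bk c k + 1 -> bk c k' <= x' <= bk c k' + 1 ->
  `|x - x'| < 2 -> k = k'.
Proof.
move=> /andP [h1 h2] /andP [h3 h4]; rewrite ltr_norml => /andP [h5 h6].
have a1 := @bk_lt R c k c k' 3 ltac:(change (bk c k < bk c k' + 3 :> R); lra).
have a2 := @bk_lt R c k' c k 3 ltac:(change (bk c k' < bk c k + 3 :> R); lra).
clear -a1 a2; lia.
Qed.

Lemma Blk_closed {R : realType} c (x : R) :
  (forall e, 0 < e -> exists x', `|x - x'| < e /\ Blk c x') -> Blk c x.
Proof.
move=> H.
pose m := Num.floor (x - c%:~R).
have /andP [f1 f2] := floor_itv (x - c%:~R).
pose k0 := (m %/ 4)%Z; pose r0 := (m %% 4)%Z.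
have hm : m = (k0 * 4 + r0)%R by rewrite /k0 /r0; lia.
have hr : (0 <= r0 <= 3)%R by apply/andP; split; rewrite /r0; lia.
have e1 : ((4 * k0 + c)%:~R : R) <= (m + c)%:~R by rewrite ler_int; lia.
have e2 : ((m + 1 + c)%:~R : R) <= (4 * k0 + c + 4)%:~R.
  by rewrite ler_int; move: hr => /andP [_ ?]; lia.
rewrite !intrD in e1 e2 f2.
have lo : bk c k0 <= x by rewrite /bk intrD; rewrite -/m in f1; lra.
have hi : x < bk c k0 + 4 by rewrite /bk intrD; rewrite -/m in f2; lra.
case: (lerP x (bk c k0 + 1)) => h1; first by exists k0; apply/andP.
pose d := Num.min (x - bk c k0 - 1) (bk c k0 + 4 - x).
have d0 : 0 < d by rewrite /d lt_min; apply/andP; split; lra.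
have [x' [hx' [k' /andP [h3 h4]]]] := H d d0.
have d1 : d <= x - bk c k0 - 1 by rewrite /d ge_min lexx.
have d2 : d <= bk c k0 + 4 - x by rewrite /d ge_min lexx orbT.
move: hx'; rewrite ltr_norml => /andP [h5 h6].
have a1 := @bk_lt R c k' c k0 4 ltac:(change (bk c k' < bk c k0 + 4 :> R); lra).
have a2 := @bk_lt R c k0 c k' 0 ltac:(change (bk c k0 < bk c k' + 0 :> R); lra).
exfalso; clear -a1 a2; lia.
Qed.


Lemma Blk_cover {R : realType} (x : R) :
  Blk 0 x \/ Blk 1 x \/ Blk 2 x \/ Blk 3 x.
Proof.
pose m := Num.floor x.
have /andP [f1 f2] := floor_itv x.
pose k0 := (m %/ 4)%Z; pose r0 := (m %% 4)%Z.
have hm : m = (4 * k0 + r0)%R by rewrite /k0 /r0; lia.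
have hr : r0 = 0 \/ r0 = 1 \/ r0 = 2 \/ r0 = 3 by rewrite /r0; lia.
have hb : bk r0 k0 <= x <= bk r0 k0 + 1.
  rewrite /bk -hm -/m; apply/andP; split => //.
  by rewrite intrD in f2; apply: ltW.
case: hr => [e|[e|[e|e]]]; rewrite e in hb.
- by left; exists k0.
- by right; left; exists k0.
- by right; right; left; exists k0.
- by right; right; right; exists k0.
Qed.

Lemma Blk_disj {R : realType} c (x : R) : Blk c x -> Blk (c + 2) x -> False.
Proof.
move=> [k /andP [h1 h2]] [k' /andP [h3 h4]].
have a1 := @bk_le R (c + 2) k' c k 1 ltac:(change (bk (c+2) k' <= bk c k + 1 :> R); lra).
have a2 := @bk_le R c k (c + 2) k' 1 ltac:(change (bk c k <= bk (c+2) k' + 1 :> R); lra).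
clear -a1 a2; lia.
Qed.

Lemma bk_shift {R : realType} c k : (bk (c + 4) k : R) = bk c (k + 1).
Proof. by rewrite /bk; congr intmul; lia. Qed.

Lemma Blk_shift {R : realType} c (x : R) : Blk (c + 4) x <-> Blk c x.
Proof.
split => [[k hk]|[k hk]]; first by exists (k + 1); rewrite -bk_shift.
by exists (k - 1); rewrite bk_shift; have -> : (k - 1 + 1 = k)%R by lia.
Qed.

Lemma Blk_int_empty {R : realType} (c c' : int) (x y : R) :
  (0 <= c <= 3)%R -> (0 <= c' <= 3)%R -> c != c' ->
  ~ int2 (fun x _ => Blk c x /\ Blk c' x) x y.
Proof.
move=> hc hc' ne [e e0 he].
have [d [d0 de d1]] := small_pos e0.
have n0 : `|y - y| < e by rewrite subrr normr0.
have nx : `|x - x| < e by rewrite subrr normr0.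
have nd : `|x - (x + d)| < e by rewrite opprD addrA subrr add0r normrN gtr0_norm.
have [[k1 hk1] [k1' hk1']] := he x y nx n0.
have [[k2 hk2] [k2' hk2']] := he (x + d) y nd n0.
have n2 : `|x - (x + d)| < 2 by rewrite opprD addrA subrr add0r normrN gtr0_norm //; lra.
have e1 := BU hk1 hk2 n2.
have e2 := BU hk1' hk2' n2.
subst k2 k2'.
move: hk1 hk1' hk2 hk2' => /andP [a1 a2] /andP [a3 a4] /andP [a5 a6] /andP [a7 a8].
have b1 := @bk_lt R c' k1' c k1 1 ltac:(change (bk c' k1' < bk c k1 + 1 :> R); lra).
have b2 := @bk_lt R c k1 c' k1' 1 ltac:(change (bk c k1 < bk c' k1' + 1 :> R); lra).
move/eqP: ne; clear -b1 b2 hc hc'; lia.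
Qed.

Lemma clo2_mono {R : realType} (P Q : R -> R -> Prop) :
  (forall x y, P x y -> Q x y) -> forall x y, clo2 P x y -> clo2 Q x y.
Proof.
move=> PQ x y h e e0; have [x' [y' [h1 [h2 h3]]]] := h e e0.
by exists x', y'; split => //; split => //; exact: PQ.
Qed.

Lemma int2_sub {R : realType} (P : R -> R -> Prop) x y : int2 P x y -> P x y.
Proof. by move=> [e e0 h]; apply: h; rewrite subrr normr0. Qed.

Lemma rc2 {R : realType} (P Q : R -> R -> Prop) :
  (forall x y, clo2 P x y -> P x y) ->
  (forall x y, Q x y -> int2 P x y) ->
  (forall x y, P x y -> clo2 Q x y) ->
  forall x y, clo2 (int2 P) x y <-> P x y.
Proof.
move=> cP QP PQ x y; split.
  by move=> h; apply: cP; apply: (clo2_mono (@int2_sub R P)).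
by move=> h; apply: (clo2_mono QP); exact: PQ.
Qed.


Definition BlkO {R : realType} (c : int) (x : R) :=
  exists k : int, bk c k < x < bk c k + 1.
Definition Rp {R : realType} (c : int) (x y : R) :=
  exists k : int, bk c k <= x <= bk c k + 1 /\ y <= bk c k.
Definition RpO {R : realType} (c : int) (x y : R) :=
  exists k : int, bk c k < x < bk c k + 1 /\ y < bk c k.
Definition Ep {R : realType} (c : int) (x y : R) :=
  exists k : int, bk c k <= x <= bk c k + 1 /\ bk c k <= y.
Definition Tt {R : realType} (x y : R) := x + 2 <= y.
Definition TtO {R : realType} (x y : R) := x + 2 < y.

Lemma normlt {R : realType} (a b e : R) : `|a - b| < e -> a - e < b < a + e.
Proof. by rewrite ltr_norml => /andP [h1 h2]; apply/andP; split; lra. Qed.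

Lemma normlt_intro {R : realType} (a b e : R) : a - e < b < a + e -> `|a - b| < e.
Proof. by move=> /andP [h1 h2]; rewrite ltr_norml; apply/andP; split; lra. Qed.

Lemma min3 {R : realType} (a b c : R) : 0 < a -> 0 < b -> 0 < c ->
  exists2 e, 0 < e & [/\ e <= a, e <= b & e <= c].
Proof.
move=> ha hb hc; exists (Num.min a (Num.min b c)).
  by rewrite !lt_min ha hb hc.
by split; rewrite !ge_min ?lexx ?orbT.
Qed.

Lemma Blk_cl {R : realType} c (x y : R) :
  clo2 (fun x _ => Blk c x) x y -> Blk c x.
Proof.
move=> h; apply: Blk_closed => e e0.
by have [x' [y' [h1 [h2 h3]]]] := h e e0; exists x'.
Qed.

Lemma Blk_op {R : realType} c (x y : R) : BlkO c x -> int2 (fun x _ => Blk c x) x y.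
Proof.
move=> [k /andP [h1 h2]].
have [e e0 [e1 e2 _]] := @min3 R (x - bk c k) (bk c k + 1 - x) 1
  ltac:(lra) ltac:(lra) ltac:(lra).
exists e => // x' y' /normlt /andP [h3 h4] _.
by exists k; apply/andP; split; lra.
Qed.

Lemma Blk_dense {R : realType} c (x y : R) : Blk c x -> clo2 (fun x _ => BlkO c x) x y.
Proof.
move=> [k /andP [h1 h2]] e e0.
have [d [d0 de d1]] := small_pos e0.
case: (lerP x (bk c k + 1/2)) => h.
- exists (x + d / 2), y; split; first by apply: normlt_intro; apply/andP; split; lra.
  split; first by rewrite subrr normr0.
  by exists k; apply/andP; split; lra.
- exists (x - d / 2), y; split; first by apply: normlt_intro; apply/andP; split; lra.
  split; first by rewrite subrr normr0.
  by exists k; apply/andP; split; lra.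
Qed.

Lemma Blk_rc {R : realType} c (x y : R) :
  clo2 (int2 (fun x _ => Blk c x)) x y <-> Blk c x.
Proof.
apply: (@rc2 R (fun x _ => Blk c x) (fun x _ => BlkO c x)).
- by move=> ? ?; exact: Blk_cl.
- by move=> ? ?; exact: Blk_op.
- by move=> ? ?; exact: Blk_dense.
Qed.

Lemma Rp_Blk {R : realType} c (x y : R) : Rp c x y -> Blk c x.
Proof. by move=> [k [h _]]; exists k. Qed.

Lemma Rp_cl {R : realType} c (x y : R) : clo2 (Rp c) x y -> Rp c x y.
Proof.
move=> h.
have [k hk] := Blk_cl (clo2_mono (@Rp_Blk R c) h).
exists k; split => //.
case: (lerP y (bk c k)) => // hy; exfalso.
have [e e0 [e1 e2 _]] := @min3 R (y - bk c k) 1 1 ltac:(lra) ltac:(lra) ltac:(lra).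
have [x' [y' [h1 [h2 [k' [hk' hy']]]]]] := h e e0.
have n2 : `|x - x'| < 2 by apply: (lt_le_trans h1); lra.
have ek := BU hk hk' n2; subst k'.
move: h2 => /normlt /andP [h3 h4]; lra.
Qed.

Lemma Rp_op {R : realType} c (x y : R) : RpO c x y -> int2 (Rp c) x y.
Proof.
move=> [k [/andP [h1 h2] h3]].
have [e e0 [e1 e2 e3]] := @min3 R (x - bk c k) (bk c k + 1 - x) (bk c k - y)
  ltac:(lra) ltac:(lra) ltac:(lra).
exists e => // x' y' /normlt /andP [h4 h5] /normlt /andP [h6 h7].
by exists k; split; [apply/andP; split|]; lra.
Qed.

Lemma Rp_dense {R : realType} c (x y : R) : Rp c x y -> clo2 (RpO c) x y.
Proof.
move=> [k [/andP [h1 h2] h0]] e e0.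
have [d [d0 de d1]] := small_pos e0.
have ny : `|y - (y - d / 2)| < e by apply: normlt_intro; apply/andP; split; lra.
case: (lerP x (bk c k + 1/2)) => h.
- exists (x + d / 2), (y - d / 2); split; first by apply: normlt_intro; apply/andP; split; lra.
  split => //; exists k; split; [apply/andP; split|]; lra.
- exists (x - d / 2), (y - d / 2); split; first by apply: normlt_intro; apply/andP; split; lra.
  split => //; exists k; split; [apply/andP; split|]; lra.
Qed.

Lemma Rp_rc {R : realType} c (x y : R) : clo2 (int2 (Rp c)) x y <-> Rp c x y.
Proof.
apply: (@rc2 R (Rp c) (RpO c)).
- by move=> ? ?; exact: Rp_cl.
- by move=> ? ?; exact: Rp_op.
- by move=> ? ?; exact: Rp_dense.
Qed.

Lemma Tt_rc {R : realType} (x y : R) : clo2 (int2 (@Tt R)) x y <-> Tt x y.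
Proof.
apply: (@rc2 R (@Tt R) (@TtO R)).
- move=> x0 y0 h; rewrite /Tt; case: (lerP (x0 + 2) y0) => // hl; exfalso.
  have [x' [y' [h1 [h2 h3]]]] := h ((x0 + 2 - y0) / 2) ltac:(lra).
  move: h1 h2 h3 => /normlt /andP [h4 h5] /normlt /andP [h6 h7]; rewrite /Tt; lra.
- move=> x0 y0 h; rewrite /TtO in h.
  exists ((y0 - x0 - 2) / 2); first lra.
  by move=> x' y' /normlt /andP [h4 h5] /normlt /andP [h6 h7]; rewrite /Tt; lra.
- move=> x0 y0 h e e0; exists x0, (y0 + e / 2); split; first by rewrite subrr normr0.
  split; first by apply: normlt_intro; apply/andP; split; lra.
  by rewrite /TtO; rewrite /Tt in h; lra.
Qed.

Lemma Ep_cl {R : realType} c (x y : R) : clo2 (Ep c) x y -> Ep c x y.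
Proof.
move=> h.
have EpB : forall x y : R, Ep c x y -> Blk c x by move=> ? ? [k [hk _]]; exists k.
have [k hk] := Blk_cl (clo2_mono EpB h).
exists k; split => //.
case: (lerP (bk c k) y) => // hy; exfalso.
have [e e0 [e1 e2 _]] := @min3 R (bk c k - y) 1 1 ltac:(lra) ltac:(lra) ltac:(lra).
have [x' [y' [h1 [h2 [k' [hk' hy']]]]]] := h e e0.
have n2 : `|x - x'| < 2 by apply: (lt_le_trans h1); lra.
have ek := BU hk hk' n2; subst k'.
move: h2 => /normlt /andP [h3 h4]; lra.
Qed.


Lemma nbhsV_intro {R : realType} {m : nat} (p : 'rV[R]_m.+2) (A : set 'rV[R]_m.+2) (e : R) :
  0 < e -> (forall q : 'rV[R]_m.+2, (forall i j, `|p i j - q i j| < e) -> A q) -> nbhs p A.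
Proof.
move=> e0 h; apply/nbhs_ballP; exists e => // q [_ hq]; apply: h => i j.
by have := hq i j; rewrite -ball_normE.
Qed.

Lemma nbhsV_elim {R : realType} {m : nat} (p : 'rV[R]_m.+2) (A : set 'rV[R]_m.+2) :
  nbhs p A -> exists2 e : R, 0 < e & forall q : 'rV[R]_m.+2, (forall i j, `|p i j - q i j| < e) -> A q.
Proof.
move=> /nbhs_ballP [e e0 h]; exists e => // q hq; by apply: h; split => // i j.
Qed.

Definition cX {R : realType} {m : nat} (p : 'rV[R]_m.+2) : R := p ord0 ord0.
Definition cY {R : realType} {m : nat} (p : 'rV[R]_m.+2) : R := p ord0 (inord 1).
Definition S2 {R : realType} {m : nat} (P : R -> R -> Prop) : set 'rV[R]_m.+2 :=
  [set p | P (cX p) (cY p)].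
Definition shiftv {R : realType} {m : nat} (p : 'rV[R]_m.+2) (a b : R) :=
  p + a *: delta_mx ord0 ord0 + b *: delta_mx ord0 (inord 1).

Lemma ord1_neq {m : nat} : (ord0 : 'I_m.+2) != inord 1.
Proof. by apply/eqP => /(congr1 val) /=; rewrite inordK. Qed.

Lemma shiftv_X {R : realType} {m : nat} (p : 'rV[R]_m.+2) a b :
  cX (shiftv p a b) = cX p + a.
Proof.
rewrite /cX /shiftv !mxE eqxx /= (negbTE ord1_neq) /=.
by rewrite mulr1 mulr0 addr0.
Qed.

Lemma shiftv_Y {R : realType} {m : nat} (p : 'rV[R]_m.+2) a b :
  cY (shiftv p a b) = cY p + b.
Proof.
rewrite /cY /shiftv !mxE eqxx /= eq_sym (negbTE ord1_neq) /= eqxx.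
by rewrite mulr1 mulr0 addr0.
Qed.

Lemma shiftv_near {R : realType} {m : nat} (p : 'rV[R]_m.+2) a b i j :
  `|p i j - shiftv p a b i j| <= `|a| + `|b|.
Proof.
have e : forall u v w : R, u - (u + v + w) = -(v + w) by move=> u v w; lra.
rewrite /shiftv !mxE e normrN.
case: (_ && _); case: (_ && _); rewrite /= ?mulr1 ?mulr0 ?addr0 ?add0r.
- exact: ler_normD.
- by rewrite lerDl.
- by rewrite lerDr.
- by rewrite normr0 addr_ge0.
Qed.

Lemma S2_ext {R : realType} {m : nat} (P Q : R -> R -> Prop) :
  (forall x y, P x y <-> Q x y) -> (S2 P : set 'rV[R]_m.+2) = S2 Q.
Proof. by move=> h; apply/seteqP; split => p /=; apply h. Qed.

Lemma closureS2 {R : realType} {m : nat} (P : R -> R -> Prop) :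
  closure (S2 P : set 'rV[R]_m.+2) = S2 (clo2 P).
Proof.
apply/seteqP; split => p hp.
- move=> e e0.
  have : nbhs p [set q : 'rV[R]_m.+2 | `|cX p - cX q| < e /\ `|cY p - cY q| < e].
    by apply: (nbhsV_intro e0) => q hq; split; apply: hq.
  move=> /hp [q [Pq [h1 h2]]].
  by exists (cX q), (cY q).
- move=> B /nbhsV_elim [e e0 hB].
  have [x' [y' [h1 [h2 h3]]]] := hp (e / 2) ltac:(lra).
  exists (shiftv p (x' - cX p) (y' - cY p)); split.
    by rewrite /S2 /= shiftv_X shiftv_Y !subrKC.
  apply: hB => i j; apply: (le_lt_trans (shiftv_near _ _ _ _ _)).
  by rewrite -normrN opprB -(normrN (y' - _)) opprB; lra.
Qed.

Lemma interiorS2 {R : realType} {m : nat} (P : R -> R -> Prop) :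
  interior (S2 P : set 'rV[R]_m.+2) = S2 (int2 P).
Proof.
apply/seteqP; split => p hp.
- have [e e0 hB] := nbhsV_elim hp.
  exists (e / 2); first lra.
  move=> x' y' h1 h2.
  have := hB (shiftv p (x' - cX p) (y' - cY p)).
  rewrite /S2 /= shiftv_X shiftv_Y !subrKC; apply => i j.
  apply: (le_lt_trans (shiftv_near _ _ _ _ _)).
  by rewrite -normrN opprB -(normrN (y' - _)) opprB; lra.
- have [e e0 he] := hp.
  by apply: (nbhsV_intro e0) => q hq; apply: he; apply: hq.
Qed.

Lemma S2_rc {R : realType} {m : nat} (P : R -> R -> Prop) :
  (forall x y, clo2 (int2 P) x y <-> P x y) ->
  regular_closed (S2 P : set 'rV[R]_m.+2).
Proof. by move=> h; rewrite /regular_closed interiorS2 closureS2; apply: S2_ext. Qed.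

Lemma S2_ne {R : realType} {m : nat} (P : R -> R -> Prop) x y :
  P x y -> (S2 P : set 'rV[R]_m.+2) !=set0.
Proof.
move=> h; exists (shiftv 0 x y).
by rewrite /S2 /= shiftv_X shiftv_Y /cX /cY !mxE !add0r.
Qed.


Lemma Rp_shift {R : realType} c (x y : R) : Rp (c + 4) x y <-> Rp c x y.
Proof.
split => [[k hk]|[k hk]]; first by exists (k + 1); rewrite -bk_shift.
by exists (k - 1); rewrite bk_shift; have -> : (k - 1 + 1 = k)%R by lia.
Qed.

Lemma key5 {R : realType} (s : int) (x y : R) :
  int2 (fun x y => Blk s x /\ clo2 (fun x y => ~ Rp s x y) x y) x y -> Ep s x y.
Proof.
move=> [e e0 h].
have n0 : forall z : R, `|z - z| < e by move=> z; rewrite subrr normr0.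
have [[k hk] hc] := h x y (n0 x) (n0 y).
exists k; split => //.
case: (lerP (bk s k) y) => // hy; exfalso.
have [d d0 [d1 d2 d3]] := @min3 R e 1 (bk s k - y) e0 ltac:(lra) ltac:(lra).
have [x'' [y'' [h1 [h2 h3]]]] := hc d d0.
have [[k'' hk''] _] := h x'' y'' (lt_le_trans h1 d1) (lt_le_trans h2 d1).
have n2 : `|x - x''| < 2 by apply: (lt_le_trans h1); lra.
have ek := BU hk hk'' n2; subst k''.
apply: h3; exists k; split => //.
by move: h2 => /normlt /andP [h4 h5]; lra.
Qed.

Lemma RpEp_disj {R : realType} c (x y : R) : Rp c x y -> Ep (c + 1) x y -> False.
Proof.
move=> [k [/andP [h1 h2] h3]] [k' [/andP [h4 h5] h6]].
have a1 := @bk_le R (c + 1) k' c k 0 ltac:(change (bk (c+1) k' <= bk c k + 0 :> R); lra).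
have a2 := @bk_le R c k (c + 1) k' 1 ltac:(change (bk c k <= bk (c+1) k' + 1 :> R); lra).
clear -a1 a2; lia.
Qed.

Definition rr {R : realType} {m : nat} (i : 'I_4) : set 'rV[R]_m.+2 :=
  S2 (fun x _ => Blk (i : nat)%:Z x).
Definition rp {R : realType} {m : nat} (i : 'I_4) : set 'rV[R]_m.+2 :=
  S2 (Rp (i : nat)%:Z).
Definition tt {R : realType} {m : nat} : set 'rV[R]_m.+2 := S2 (@Tt R).

Lemma succ4_val (i : 'I_4) :
  ((succ4 i : nat) = i.+1 /\ (i < 3)%N) \/ ((succ4 i : nat) = 0%N /\ (i : nat) = 3%N).
Proof.
case: i => [[|[|[|[|k]]]] hk] //=; rewrite /succ4 inordK //=; by [left|right].
Qed.

Lemma rr_succ {R : realType} {m : nat} (i : 'I_4) :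
  (rr (succ4 i) : set 'rV[R]_m.+2) = S2 (fun x _ => Blk ((i : nat)%:Z + 1) x).
Proof.
rewrite /rr; apply: S2_ext => x y.
case: (succ4_val i) => [[-> _]|[-> ->]].
  by rewrite -addn1 PoszD.
by rewrite -(Blk_shift 0).
Qed.

Lemma rp_succ {R : realType} {m : nat} (i : 'I_4) :
  (rp (succ4 i) : set 'rV[R]_m.+2) = S2 (Rp ((i : nat)%:Z + 1)).
Proof.
rewrite /rp; apply: S2_ext => x y.
case: (succ4_val i) => [[-> _]|[-> ->]].
  by rewrite -addn1 PoszD.
by rewrite -(Rp_shift 0).
Qed.

Lemma rr_inord {R : realType} {m : nat} (k : nat) : (k < 4)%N ->
  (rr (inord k) : set 'rV[R]_m.+2) = S2 (fun x _ => Blk k%:Z x).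
Proof. by move=> hk; rewrite /rr inordK. Qed.


Section M.
Context {R : realType} {m : nat}.
Local Notation V := 'rV[R]_m.+2.

Lemma rr_rc i : regular_closed (rr i : set V).
Proof. by apply: S2_rc => x y; exact: Blk_rc. Qed.

Lemma rp_rc i : regular_closed (rp i : set V).
Proof. by apply: S2_rc => x y; exact: Rp_rc. Qed.

Lemma tt_rc : regular_closed (tt : set V).
Proof. by apply: S2_rc => x y; exact: Tt_rc. Qed.

Lemma rr_cover : rc_add (rc_add (rc_add (rr (inord 0)) (rr (inord 1))) (rr (inord 2)))
    (rr (inord 3)) = (setT : set V).
Proof.
rewrite !rr_inord //; apply/seteqP; split => // p _.
case: (Blk_cover (cX p)) => [h|[h|[h|h]]].
- by left; left; left.
- by left; left; right.
- by left; right.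
- by right.
Qed.

Lemma rr_mul0 (i j : 'I_4) : (i < j)%N -> rc_mul (rr i) (rr j) = (set0 : set V).
Proof.
move=> ij.
rewrite /rc_mul (_ : rr i `&` rr j = S2 (fun x _ => Blk (i : nat)%:Z x /\ Blk (j : nat)%:Z x)) //.
rewrite interiorS2 closureS2; apply/seteqP; split => // p hp.
have [x' [y' [_ [_ h]]]] := hp 1 ltr01.
apply: (Blk_int_empty _ _ _ h).
- by apply/andP; split; [|have := ltn_ord i]; lia.
- by apply/andP; split; [|have := ltn_ord j]; lia.
- by apply/eqP => -[e]; move: ij; rewrite e ltnn.
Qed.

Lemma rr_ne i : (rr i : set V) <> set0.
Proof.
move=> e; have [p hp] := @S2_ne R m (fun x _ => Blk (i : nat)%:Z x) (bk (i : nat)%:Z 0) 0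
  ltac:(exists 0; apply/andP; split; lra).
by have : (rr i : set V) p by []; rewrite e.
Qed.

Lemma rp_ne i : (rp i : set V) <> set0.
Proof.
move=> e; have [p hp] := @S2_ne R m (Rp (i : nat)%:Z) (bk (i : nat)%:Z 0) (bk (i : nat)%:Z 0)
  ltac:(exists 0; split => //; apply/andP; split; lra).
by have : (rp i : set V) p by []; rewrite e.
Qed.

Lemma tt_ne : (tt : set V) <> set0.
Proof.
move=> e; have [p hp] := @S2_ne R m (@Tt R) 0 2 ltac:(rewrite /Tt; lra).
by have : (tt : set V) p by []; rewrite e.
Qed.

Lemma nc02 : ~ contact (rr (inord 0) : set V) (rr (inord 2)).
Proof.
rewrite !rr_inord // => -[p [h0 h2]].
exact: (@Blk_disj R 0 (cX p) h0 h2).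
Qed.

Lemma nc13 : ~ contact (rr (inord 1) : set V) (rr (inord 3)).
Proof.
rewrite !rr_inord // => -[p [h0 h2]].
exact: (@Blk_disj R 1 (cX p) h0 h2).
Qed.

Lemma rp_le i : rc_le (rp i : set V) (rr i).
Proof.
rewrite /rc_le /rc_mul (_ : rp i `&` rr i = rp i); first exact: rp_rc.
apply/seteqP; split => p; first by case.
by move=> hp; split => //; move: hp; rewrite /rp /rr /S2 /=; exact: Rp_Blk.
Qed.

Lemma nct i : ~ contact (rp i : set V) tt.
Proof.
move=> [p [[k [/andP [h1 h2] h3]] h4]]; move: h4; rewrite /tt /S2 /Tt /= => h4; lra.
Qed.

Lemma nc5 i : ~ contact (rp i : set V) (rc_mul (rr (succ4 i)) (rc_compl (rp (succ4 i)))).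
Proof.
rewrite rr_succ rp_succ /rc_mul /rc_compl.
set s := ((i : nat)%:Z + 1)%R.
rewrite (_ : ~` S2 (Rp s) = S2 (fun x y => ~ Rp s x y)) // closureS2.
rewrite (_ : S2 (fun x _ => Blk s x) `&` S2 (clo2 (fun x y => ~ Rp s x y)) =
   S2 (fun x y => Blk s x /\ clo2 (fun x y => ~ Rp s x y) x y)) //.
rewrite interiorS2 closureS2 => -[p [h1 h2]].
have h3 : Ep s (cX p) (cY p).
  apply: Ep_cl; apply: (clo2_mono _ h2) => x y; exact: key5.
exact: (RpEp_disj h1 h3).
Qed.

End M.


Section C.
Context {R : realType} {m : nat}.
Local Notation V := 'rV[R]_m.+2.

Definition Seg (p q : V) : set V := (fun s : R => p + s *: (q - p)) @` `[0, 1].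

Lemma Seg_conn (p q : V) : connected (Seg p q).
Proof.
apply: connected_continuous_connected; first exact: segment_connected.
apply: continuous_subspaceT => s.
apply: cvgD; first exact: cvg_cst.
apply: cvgZl; exact: cvg_id.
Qed.

Lemma Seg_l (p q : V) : Seg p q p.
Proof.
by exists 0; [rewrite /= in_itv /= lexx ler01 | rewrite scale0r addr0].
Qed.

Lemma Seg_r (p q : V) : Seg p q q.
Proof.
by exists 1; [rewrite /= in_itv /= lexx ler01 | rewrite scale1r addrC subrK].
Qed.

Lemma Seg_mem (p q z : V) : Seg p q z -> exists s : R, [/\ 0 <= s, s <= 1,
  cX z = cX p + s * (cX q - cX p) & cY z = cY p + s * (cY q - cY p)].
Proof.
move=> [s hs <-]; move: hs; rewrite /= in_itv /= => /andP [h1 h2].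
by exists s; split => //; rewrite /cX /cY !mxE.
Qed.

Lemma conn2 (c : int) :
  connected (S2 (Rp c) `|` S2 (fun x _ => Blk (c + 1) x) `|` S2 (@Tt R) : set V).
Proof.
set U := (X in connected X).
pose q0 : V := shiftv 0 0 2.
have q0X : cX q0 = 0 by rewrite shiftv_X /cX mxE add0r.
have q0Y : cY q0 = 2 by rewrite shiftv_Y /cY mxE add0r.
have Ut : forall z, Tt (cX z) (cY z) -> U z by move=> z h; right.
have Ub : forall z, Blk (c + 1) (cX z) -> U z by move=> z h; left; right.
have Ur : forall z, Rp c (cX z) (cY z) -> U z by move=> z h; left; left.
have segT : forall p, Tt (cX p) (cY p) -> Seg q0 p `<=` U.
  move=> p hp z /Seg_mem [s [s0 s1 ex ey]]; apply: Ut.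
  rewrite ex ey q0X q0Y /Tt; rewrite /Tt in hp.
  have : 0 <= s * (cY p - 2 - cX p) by apply: mulr_ge0 => //; lra.
  lra.
pose good := [set L : set V | [/\ connected L, L q0 & L `<=` U]].
have goodT : forall p, Tt (cX p) (cY p) -> exists2 L, good L & L p.
  move=> p hp; exists (Seg q0 p); last exact: Seg_r.
  by split; [exact: Seg_conn | exact: Seg_l | exact: segT].
have goodB : forall p, Blk (c + 1) (cX p) -> exists2 L, good L & L p.
  move=> p hp.
  pose ps := shiftv p 0 (`|cX p - cY p| + 2).
  have psT : Tt (cX ps) (cY ps).
    rewrite /ps shiftv_X shiftv_Y /Tt addr0.
    have := ler_norm (cX p - cY p); lra.
  exists (Seg p ps `|` Seg q0 ps); last by left; exact: Seg_l.
  split.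
  - apply: connectedU; [exists ps; split; exact: Seg_r | exact: Seg_conn | exact: Seg_conn].
  - by right; exact: Seg_l.
  - move=> z [hz|hz]; last exact: segT hz.
    move: hz => /Seg_mem [s [s0 s1 ex ey]]; apply: Ub.
    by rewrite ex /ps shiftv_X addr0 subrr mulr0 addr0.
have goodR : forall p, Rp c (cX p) (cY p) -> exists2 L, good L & L p.
  move=> p [k [/andP [h1 h2] h3]].
  pose ph := shiftv p (bk c k + 1 - cX p) 0.
  have phX : cX ph = bk c k + 1 by rewrite /ph shiftv_X; lra.
  have phY : cY ph = cY p by rewrite /ph shiftv_Y addr0.
  have phB : Blk (c + 1) (cX ph).
    exists k; rewrite phX (_ : bk (c + 1) k = bk c k + 1 :> R).
      by rewrite lexx /=; lra.
    by rewrite /bk addrA intrD.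
  have [L [cL L0 LU] Lph] := goodB ph phB.
  exists (Seg p ph `|` L); last by left; exact: Seg_l.
  split.
  - by apply: connectedU => //; [exists ph; split => //; exact: Seg_r | exact: Seg_conn].
  - by right.
  - move=> z [hz|hz]; last exact: LU.
    move: hz => /Seg_mem [s [s0 s1 ex ey]]; apply: Ur.
    exists k; rewrite ex ey phX phY subrr mulr0 addr0; split => //.
    have : 0 <= s * (bk c k + 1 - cX p) by apply: mulr_ge0 => //; lra.
    have : s * (bk c k + 1 - cX p) <= 1 * (bk c k + 1 - cX p).
      by apply: ler_wpM2r => //; lra.
    move=> ha hb; apply/andP; split; lra.
have -> : U = \bigcup_(L in good) L.
  apply/seteqP; split => z.
  - move=> [[hz|hz]|hz].
    + by have [L gL Lz] := goodR z hz; exists L.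
    + by have [L gL Lz] := goodB z hz; exists L.
    + by have [L gL Lz] := goodT z hz; exists L.
  - by move=> [L [_ _ LU] Lz]; exact: LU.
apply: bigcup_connected; first by exists q0 => L [].
by move=> L [].
Qed.

End C.

End Part1.

Theorem theorem3p1 :
  (forall (R : realType) (n : nat), (2 <= n)%N ->
     exists (r r' : 'I_4 -> set 'rV[R]_n) (t : set 'rV[R]_n), phi_inf r r' t)
  /\
  (forall (T : topologicalType), locally_connected T -> unicoherent T ->
     forall (r r' : 'I_4 -> set T) (t : set T), phi_inf r r' t ->
       (exists i, infinitely_many_components (r i)) \/
       (exists i, infinitely_many_components (r' i)) \/
       infinitely_many_components t).
Proof.
split; last by move=> T _ uni; exact: part2.
move=> R [|[|m]] // _.
exists rr, rp, tt.
split; first exact: rr_rc.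
split; first exact: rp_rc.
split; first exact: tt_rc.
split; first exact: rr_cover.
split; first exact: rr_mul0.
split; first exact: rr_ne.
split; first exact: nc02.
split; first exact: nc13.
split; first by move=> i; split; [exact: rp_ne | exact: rp_le].
split; first exact: tt_ne.
split; first by move=> i; rewrite rr_succ; exact: conn2.
split; first exact: nct.
exact: nc5.
Qed.
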